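(* Let $\mathcal C$ be a $G$-category and $(F,\psi)\colon\mathcal C\to\mathcal C'$ a $G$-invariant functor. The following are equivalent: (1) $(F,\psi)$ is a $G$-covering; (2) $(F,\psi)$ is a $G$-precovering which is universal among $G$-precoverings from $\mathcal C$ (for every $G$-precovering $(E,\chi)\colon\mathcal C\to\mathcal C''$ there is a functor $K\colon\mathcal C'\to\mathcal C''$, unique up to natural isomorphism, with $(E,\chi)\cong(KF,K\psi)$ as $G$-invariant functors); (3) $(F,\psi)$ is universal among $G$-invariant functors from $\mathcal C$ (same property for all $G$-invariant $(E,\chi)$); (4) there exists an equivalence $H\colon\mathcal C/G\to\mathcal C'$ with $(F,\psi)\cong(HP,H\phi)$ as $G$-invariant functors; (5) there exists an equivalence $H\colon\mathcal C/G\to\mathcal C'$ with $F=HP$ and $\psi=H\phi$.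
   Context: $\Bbbk$ is a commutative ring; all categories and functors are $\Bbbk$-linear; $G$ is a group. A $G$-category is a category $\mathcal C$ with a group homomorphism $A\colon G\to\operatorname{Aut}(\mathcal C)$; write $\alpha x=A_\alpha x$, $\alpha f=A_\alpha f$. An invariance adjuster of $F\colon\mathcal C\to\mathcal C'$ is a family of natural isomorphisms $\psi_\alpha\colon F\to FA_\alpha$ with $\psi_1=\mathrm{id}$ and $(\psi_\beta A_\alpha)\psi_\alpha=\psi_{\beta\alpha}$; $(F,\psi)$ is a $G$-invariant functor; for a functor $K$, $(KF,K\psi)$ is again $G$-invariant. Morphisms of $G$-invariant functors are natural transformations $\eta\colon F\to F'$ with $(\eta A_\alpha)\psi_\alpha=\psi'_\alpha\eta$. $F^{(1)}_{x,y}\colon\bigoplus_{\alpha\in G}\mathcal C(\alpha x,y)\to\mathcal C'(Fx,Fy)$, $(f_\alpha)\mapsto\sum_\alpha F(f_\alpha)\psi_{\alpha,x}$. $(F,\psi)$ is a $G$-precovering if all $F^{(1)}_{x,y}$ are bijective, a $G$-covering if moreover $F$ is dense. Orbit category $\mathcal C/G$: objects of $\mathcal C$; morphisms $x\to y$ are row- and column-finite families $(f_{\beta,\alpha})_{(\alpha,\beta)\in G\times G}$, $f_{\beta,\alpha}\in\mathcal C(\alpha x,\beta y)$, with $f_{\gamma\beta,\gamma\alpha}=\gamma(f_{\beta,\alpha})$; composition $(gf)_{\beta,\alpha}=\sum_\gamma g_{\beta,\gamma}f_{\gamma,\alpha}$. Canonical functor $Px=x$, $P(f)=(\delta_{\alpha,\beta}\alpha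 f)_{(\alpha,\beta)}$, with $\phi_{\mu,x}=(\delta_{\alpha,\beta\mu}\mathrm{id}_{\alpha x})_{(\alpha,\beta)}\colon Px\to P\mu x$. *)

(* Defs.v *)
From HB Require Import structures.
From mathcomp Require Import all_boot all_order all_algebra.
From mathcomp Require Import boolp classical_sets fsbigop.

Set Implicit Arguments.
Unset Strict Implicit.
Unset Printing Implicit Defensive.
Import GRing.Theory.
Local Open Scope ring_scope.
Local Open Scope classical_set_scope.

Record group := Group {
  gcar :> choiceType;
  gmul : gcar -> gcar -> gcar;
  gone : gcar;
  ginvg : gcar -> gcar;
  gmulA : forall a b c, gmul a (gmul b c) = gmul (gmul a b) c;
  gmul1g : forall a, gmul gone a = a;
  gmulVg : forall a, gmul (ginvg a) a = gone }.

Record precat (k : comPzRingType) := PreCat {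
  obj : Type;
  hom : obj -> obj -> lmodType k;
  comp : forall x y z, hom y z -> hom x y -> hom x z;
  idm : forall x, hom x x }.
Arguments comp {k p x y z}.
Arguments idm {k p} x.
Arguments hom {k} p.

Definition is_cat (k : comPzRingType) (C : precat k) : Prop :=
  [/\ (forall x y z w (h : hom C z w) (g : hom C y z) (f : hom C x y),
          comp h (comp g f) = comp (comp h g) f),
      (forall x y (f : hom C x y), comp (idm y) f = f),
      (forall x y (f : hom C x y), comp f (idm x) = f),
      (forall x y z (a : k) (g1 g2 : hom C y z) (f : hom C x y),
          comp (a *: g1 + g2) f = a *: comp g1 f + comp g2 f) &
      (forall x y z (a : k) (g : hom C y z) (f1 f2 : hom C x y),
          comp g (a *: f1 + f2) = a *: comp g f1 + comp g f2)].

Definition castH (k : comPzRingType) (C : precat k) (x x' y y' : obj C)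
  (e1 : x = x') (e2 : y = y') (f : hom C x y) : hom C x' y' :=
  match e1 in _ = x0, e2 in _ = y0 return hom C x0 y0 with
  | erefl, erefl => f end.

Definition is_iso (k : comPzRingType) (C : precat k) (x y : obj C)
  (f : hom C x y) : Prop :=
  exists g : hom C y x, comp g f = idm x /\ comp f g = idm y.

Record functor (k : comPzRingType) (C D : precat k) := Functor {
  fobj : obj C -> obj D;
  fmap : forall x y, hom C x y -> hom D (fobj x) (fobj y) }.
Arguments fmap {k C D} f {x y}.

Definition is_functor (k : comPzRingType) (C D : precat k) (F : functor C D) :=
  [/\ (forall x y z (g : hom C y z) (f : hom C x y),
          fmap F (comp g f) = comp (fmap F g) (fmap F f)),
      (forall x, fmap F (idm x) = idm (fobj F x)) &
      (forall x y (a : k) (f g : hom C x y),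
          fmap F (a *: f + g) = a *: fmap F f + fmap F g)].

Definition fid (k : comPzRingType) (C : precat k) : functor C C :=
  @Functor k C C (fun x : obj C => x) (fun x y (f : hom C x y) => f).

(* fcomp F K is the composite  K o F  (written KF in the paper) *)
Definition fcomp (k : comPzRingType) (C D E : precat k)
  (F : functor C D) (K : functor D E) : functor C E :=
  @Functor k C E (fun x => fobj K (fobj F x)) (fun x y f => fmap K (fmap F f)).

Definition ntrans (k : comPzRingType) (C D : precat k) (F F' : functor C D) :=
  forall x : obj C, hom D (fobj F x) (fobj F' x).

Definition is_natural (k : comPzRingType) (C D : precat k) (F F' : functor C D)
  (eta : ntrans F F') : Prop :=
  forall x y (f : hom C x y), comp (eta y) (fmap F f) = comp (fmap F' f) (eta x).

Definition is_natiso (k : comPzRingType) (C D : precat k) (F F' : functor C D)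
  (eta : ntrans F F') : Prop :=
  is_natural eta /\ forall x, is_iso (eta x).

Definition nat_isomorphic (k : comPzRingType) (C D : precat k) (F F' : functor C D)
  : Prop := exists eta : ntrans F F', is_natiso eta.

Definition is_equivalence (k : comPzRingType) (C D : precat k) (H : functor C D)
  : Prop :=
  is_functor H /\
  exists H' : functor D C, is_functor H' /\
    nat_isomorphic (fcomp H H') (fid C) /\ nat_isomorphic (fcomp H' H) (fid D).

Record gaction (k : comPzRingType) (G : group) (C : precat k) := GAction {
  act : G -> obj C -> obj C;
  actm : forall (a : G) x y, {linear hom C x y -> hom C (act a x) (act a y)};
  act1 : forall x, act (gone G) x = x;
  actM : forall (a b : G) x, act (gmul b a) x = act b (act a x) }.
Arguments actm {k G C} g a {x y}.

(* A : G -> Aut(C) is a group homomorphism *)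
Definition is_gcat (k : comPzRingType) (G : group) (C : precat k)
  (A : gaction G C) : Prop :=
  [/\ (forall a x y z (g : hom C y z) (f : hom C x y),
          actm A a (comp g f) = comp (actm A a g) (actm A a f)),
      (forall a x, actm A a (idm x) = idm (act A a x)),
      (forall x y (f : hom C x y),
          actm A (gone G) f = castH (esym (act1 A x)) (esym (act1 A y)) f) &
      (forall a b x y (f : hom C x y),
          actm A (gmul b a) f =
          castH (esym (actM A a b x)) (esym (actM A a b y))
                (actm A b (actm A a f)))].

Record ginvf (k : comPzRingType) (G : group) (C : precat k) (A : gaction G C)
  (D : precat k) := GInv {
  gfun : functor C D;
  gadj : forall (a : G) (x : obj C), hom D (fobj gfun x) (fobj gfun (act A a x)) }.
Arguments gfun {k G C A D}.
Arguments gadj {k G C A D}.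

Definition is_adjuster (k : comPzRingType) (G : group) (C : precat k)
  (A : gaction G C) (D : precat k) (F : functor C D)
  (psi : forall (a : G) (x : obj C), hom D (fobj F x) (fobj F (act A a x))) :=
  [/\ (forall a x y (f : hom C x y),
          comp (psi a y) (fmap F f) = comp (fmap F (actm A a f)) (psi a x)),
      (forall a x, is_iso (psi a x)),
      (forall x, psi (gone G) x =
                 castH erefl (f_equal (fobj F) (esym (act1 A x))) (idm (fobj F x))) &
      (forall a b x, comp (psi b (act A a x)) (psi a x) =
                     castH erefl (f_equal (fobj F) (actM A a b x)) (psi (gmul b a) x))].

Definition is_ginv (k : comPzRingType) (G : group) (C : precat k)
  (A : gaction G C) (D : precat k) (F : ginvf A D) : Prop :=
  is_functor (gfun F) /\ is_adjuster (gadj F).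

Definition whisker (k : comPzRingType) (G : group) (C : precat k)
  (A : gaction G C) (D E : precat k) (K : functor D E) (F : ginvf A D)
  : ginvf A E :=
  @GInv k G C A E (fcomp (gfun F) K) (fun a x => fmap K (gadj F a x)).

Definition ginvf_iso (k : comPzRingType) (G : group) (C : precat k)
  (A : gaction G C) (D : precat k) (F F' : ginvf A D) : Prop :=
  exists eta : ntrans (gfun F) (gfun F'),
    [/\ is_natural eta,
        (forall x, is_iso (eta x)) &
        (forall a x, comp (eta (act A a x)) (gadj F a x) =
                     comp (gadj F' a x) (eta x))].

Definition F1 (k : comPzRingType) (G : group) (C : precat k)
  (A : gaction G C) (D : precat k) (F : ginvf A D) (x y : obj C)
  (f : forall a : G, hom C (act A a x) y) : hom D (fobj (gfun F) x) (fobj (gfun F) y) :=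
  \sum_(a \in [set: G]) comp (fmap (gfun F) (f a)) (gadj F a x).

Definition fin_supp (k : comPzRingType) (G : group) (T : G -> lmodType k)
  (f : forall a : G, T a) : Prop :=
  exists s : seq G, forall a, f a != 0 -> a \in s.

Definition is_precovering (k : comPzRingType) (G : group) (C : precat k)
  (A : gaction G C) (D : precat k) (F : ginvf A D) : Prop :=
  forall x y : obj C,
    (* injectivity on the direct sum *)
    (forall f g : forall a : G, hom C (act A a x) y,
        fin_supp f -> fin_supp g -> F1 F f = F1 F g -> f = g) /\
    (forall h : hom D (fobj (gfun F) x) (fobj (gfun F) y),
        exists2 f : forall a : G, hom C (act A a x) y, fin_supp f & F1 F f = h).

Definition is_dense (k : comPzRingType) (C D : precat k) (F : functor C D) : Prop :=
  forall y : obj D, exists x : obj C, exists f : hom D (fobj F x) y, is_iso f.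

Definition is_covering (k : comPzRingType) (G : group) (C : precat k)
  (A : gaction G C) (D : precat k) (F : ginvf A D) : Prop :=
  is_precovering F /\ is_dense (gfun F).

Definition is_universal_among (k : comPzRingType) (G : group) (C : precat k)
  (A : gaction G C) (D : precat k) (F : ginvf A D)
  (Q : forall E : precat k, ginvf A E -> Prop) : Prop :=
  forall (E : precat k) (Ec : ginvf A E),
    is_cat E -> is_ginv Ec -> Q E Ec ->
    (exists K : functor D E, is_functor K /\ ginvf_iso Ec (whisker K F)) /\
    (forall K K' : functor D E, is_functor K -> is_functor K' ->
       ginvf_iso Ec (whisker K F) -> ginvf_iso Ec (whisker K' F) ->
       nat_isomorphic K K').

Section Orbit.
Variables (k : comPzRingType) (G : group) (C : precat k) (A : gaction G C).

Definition ofam (x y : obj C) := forall p : G * G, hom C (act A p.2 x) (act A p.1 y).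
(* f (b, a) is the entry f_{b,a} : a x -> b y *)

Lemma castH_lin (x x' y y' : obj C) (e1 : x = x') (e2 : y = y') (a : k)
  (f g : hom C x y) : castH e1 e2 (a *: f + g) = a *: castH e1 e2 f + castH e1 e2 g.
Proof. by destruct e1; destruct e2. Qed.

Lemma castH0 (x x' y y' : obj C) (e1 : x = x') (e2 : y = y') :
  castH e1 e2 0 = 0.
Proof. by destruct e1; destruct e2. Qed.

Definition orbit_prop (x y : obj C) (f : ofam x y) : Prop :=
  [/\ (forall a : G, exists s : seq G, forall b, f (b, a) != 0 -> b \in s),
      (forall b : G, exists s : seq G, forall a, f (b, a) != 0 -> a \in s) &
      (forall c b a : G, f (gmul c b, gmul c a) =
         castH (esym (actM A a c x)) (esym (actM A b c y)) (actm A c (f (b, a))))].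

Definition orbhom (x y : obj C) := {f : ofam x y | orbit_prop f}.

Section Ops.
Variables x y : obj C.

Definition ofam_zero : ofam x y := fun p => 0.
Definition ofam_add (f g : ofam x y) : ofam x y := fun p => f p + g p.
Definition ofam_opp (f : ofam x y) : ofam x y := fun p => - f p.
Definition ofam_scale (r : k) (f : ofam x y) : ofam x y := fun p => r *: f p.

Lemma orbit_lin (r : k) (f g : ofam x y) : orbit_prop f -> orbit_prop g ->
  orbit_prop (ofam_add (ofam_scale r f) g).
Proof.
move=> [cf rf ef] [cg rg eg]; split.
- move=> a; case: (cf a) => s1 h1; case: (cg a) => s2 h2; exists (s1 ++ s2) => b.
  rewrite /ofam_add /ofam_scale mem_cat.
  case: (eqVneq (f (b, a)) 0) => [->|/h1 ->//]; rewrite scaler0 add0r => /h2 ->.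
  by rewrite orbT.
- move=> b; case: (rf b) => s1 h1; case: (rg b) => s2 h2; exists (s1 ++ s2) => a.
  rewrite /ofam_add /ofam_scale mem_cat.
  case: (eqVneq (f (b, a)) 0) => [->|/h1 ->//]; rewrite scaler0 add0r => /h2 ->.
  by rewrite orbT.
- move=> c b a; rewrite /ofam_add /ofam_scale ef eg linearD linearZ /=.
  by rewrite castH_lin.
Qed.

Lemma orbit_zero : orbit_prop ofam_zero.
Proof.
split.
- by move=> a; exists [::] => b; rewrite eqxx.
- by move=> b; exists [::] => a; rewrite eqxx.
- by move=> c b a; rewrite /ofam_zero linear0 castH0.
Qed.

Lemma orbit_add (f g : ofam x y) : orbit_prop f -> orbit_prop g ->
  orbit_prop (ofam_add f g).
Proof.
move=> hf hg; have := orbit_lin 1 hf hg.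
by congr orbit_prop; apply: functional_extensionality_dep => p; rewrite /ofam_add /ofam_scale scale1r.
Qed.

Lemma orbit_scale (r : k) (f : ofam x y) : orbit_prop f -> orbit_prop (ofam_scale r f).
Proof.
move=> hf; have := orbit_lin r hf orbit_zero.
by congr orbit_prop; apply: functional_extensionality_dep => p; rewrite /ofam_add /ofam_zero addr0.
Qed.

Lemma orbit_opp (f : ofam x y) : orbit_prop f -> orbit_prop (ofam_opp f).
Proof.
move=> hf; have := orbit_scale (-1) hf.
by congr orbit_prop; apply: functional_extensionality_dep => p; rewrite /ofam_scale scaleN1r.
Qed.

Definition ozero : orbhom x y := exist _ _ orbit_zero.
Definition oadd (f g : orbhom x y) : orbhom x y :=
  exist _ _ (orbit_add (proj2_sig f) (proj2_sig g)).
Definition oopp (f : orbhom x y) : orbhom x y :=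
  exist _ _ (orbit_opp (proj2_sig f)).
Definition oscale (r : k) (f : orbhom x y) : orbhom x y :=
  exist _ _ (orbit_scale r (proj2_sig f)).

Lemma orb_eq (f g : orbhom x y) : (forall p, proj1_sig f p = proj1_sig g p) -> f = g.
Proof.
case: f g => [f hf] [g hg] /= e.
have efg : f = g by apply: functional_extensionality_dep.
by subst g; congr exist; apply: Prop_irrelevance.
Qed.

HB.instance Definition _ := gen_eqMixin (orbhom x y).
HB.instance Definition _ := gen_choiceMixin (orbhom x y).

Lemma oaddA : associative oadd.
Proof. by move=> f g h; apply: orb_eq => p /=; rewrite /ofam_add addrA. Qed.
Lemma oaddC : commutative oadd.
Proof. by move=> f g; apply: orb_eq => p /=; rewrite /ofam_add addrC. Qed.
Lemma oadd0 : left_id ozero oadd.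
Proof. by move=> f; apply: orb_eq => p /=; rewrite /ofam_add /ofam_zero add0r. Qed.
Lemma oaddN : left_inverse ozero oopp oadd.
Proof. by move=> f; apply: orb_eq => p /=; rewrite /ofam_add /ofam_opp addNr. Qed.

HB.instance Definition _ := GRing.isZmodule.Build (orbhom x y) oaddA oaddC oadd0 oaddN.

Lemma oscaleA r s (f : orbhom x y) : oscale r (oscale s f) = oscale (r * s) f.
Proof. by apply: orb_eq => p /=; rewrite /ofam_scale scalerA. Qed.
Lemma oscale1 : left_id 1 oscale.
Proof. by move=> f; apply: orb_eq => p /=; rewrite /ofam_scale scale1r. Qed.
Lemma oscaleDr : right_distributive oscale +%R.
Proof. by move=> r f g; apply: orb_eq => p /=; rewrite /ofam_scale /ofam_add scalerDr. Qed.
Lemma oscaleDl (f : orbhom x y) : {morph oscale^~ f : r s / r + s}.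
Proof. by move=> r s; apply: orb_eq => p /=; rewrite /ofam_scale /ofam_add scalerDl. Qed.

HB.instance Definition _ :=
  GRing.Zmodule_isLmodule.Build k (orbhom x y) oscaleA oscale1 oscaleDr oscaleDl.

End Ops.

(* total "smart constructor": the family itself when it satisfies the
   defining conditions of morphisms of C/G (which always holds in the
   situations below when C is a G-category), and 0 otherwise. *)
Definition omk (x y : obj C) (f : ofam x y) : orbhom x y :=
  match pselect (orbit_prop f) with
  | left h => exist _ f h
  | right _ => 0
  end.

Definition ocomp (x y z : obj C) (g : orbhom y z) (f : orbhom x y) : orbhom x z :=
  omk (fun p : G * G =>
    \sum_(b \in [set: G])
      (comp (proj1_sig g (p.1, b)) (proj1_sig f (b, p.2))
        : hom C (act A p.2 x) (act A p.1 z))).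

Definition oid (x : obj C) : orbhom x x :=
  omk (fun p : G * G =>
    match pselect (p.2 = p.1) with
    | left e => castH erefl (f_equal (fun c => act A c x) e) (idm (act A p.2 x))
    | right _ => 0
    end).

Definition orbit_cat : precat k := @PreCat k (obj C) orbhom ocomp oid.

Definition orbitP : functor C orbit_cat :=
  @Functor k C orbit_cat (fun x => x) (fun x y (f : hom C x y) =>
    omk (fun p : G * G =>
      match pselect (p.2 = p.1) with
      | left e => castH erefl (f_equal (fun c => act A c y) e) (actm A p.2 f)
      | right _ => 0
      end)).

Definition orbit_phi (mu : G) (x : obj C) : hom orbit_cat x (act A mu x) :=
  omk (fun p : G * G =>
    match pselect (p.2 = gmul p.1 mu) with
    | left e => castH erefl
                  (etrans (f_equal (fun c => act A c x) e) (actM A mu p.1 x))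
                  (idm (act A p.2 x))
    | right _ => 0
    end).

Definition orbitPphi : ginvf A orbit_cat := @GInv k G C A orbit_cat orbitP orbit_phi.

End Orbit.

(* Main.v *)
Require Import Defs.
From HB Require Import structures.
From mathcomp Require Import all_boot all_order all_algebra.
From mathcomp Require Import boolp classical_sets fsbigop.
From mathcomp Require Import finmap.
Require Import Defs.
Set Implicit Arguments.
Unset Strict Implicit.
Unset Printing Implicit Defensive.
Import GRing.Theory.
Local Open Scope ring_scope.
Local Open Scope classical_set_scope.

Section GroupLemmas.
Variable G : group.
Local Notation "a \* b" := (gmul a b) (at level 40, left associativity).
Local Notation "1g" := (gone G).

Lemma gmulV (a : G) : a \* ginvg a = 1g.
Proof.
set c := ginvg (ginvg a).
rewrite -[LHS]gmul1g -(gmulVg (ginvg a)) -/c -gmulA (gmulA (ginvg a) a).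
by rewrite gmulVg gmul1g gmulVg.
Qed.

Lemma gmulg1 (a : G) : a \* 1g = a.
Proof. by rewrite -(gmulVg a) gmulA gmulV gmul1g. Qed.

Lemma gmulKg (a b : G) : ginvg a \* (a \* b) = b.
Proof. by rewrite gmulA gmulVg gmul1g. Qed.

Lemma gmulKVg (a b : G) : a \* (ginvg a \* b) = b.
Proof. by rewrite gmulA gmulV gmul1g. Qed.

Lemma gmulI (c a b : G) : c \* a = c \* b -> a = b.
Proof. by move=> e; rewrite -(gmulKg c a) e gmulKg. Qed.

Lemma gmulIr (c a b : G) : a \* c = b \* c -> a = b.
Proof.
by move=> e; rewrite -(gmulg1 a) -(gmulV c) gmulA e -gmulA gmulV gmulg1.
Qed.

Lemma ginvK (a : G) : ginvg (ginvg a) = a.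
Proof. by apply: (@gmulI (ginvg a)); rewrite gmulV gmulVg. Qed.

End GroupLemmas.

Section LinP.
Variable k : comPzRingType.

Definition linP (V W : lmodType k) (h : V -> W) :=
  forall a x y, h (a *: x + y) = a *: h x + h y.

Variables (V W : lmodType k) (h : V -> W) (hl : linP h).

Lemma linP0 : h 0 = 0.
Proof.
have := hl 1 0 0; rewrite scale1r addr0 scale1r => e.
have e2 : h 0 + 0 = h 0 + h 0 by rewrite addr0 {1}e.
by apply/esym; apply: (addrI (h 0)); rewrite -e2.
Qed.

Lemma linPD x y : h (x + y) = h x + h y.
Proof. by have := hl 1 x y; rewrite !scale1r. Qed.

Lemma linPZ a x : h (a *: x) = a *: h x.
Proof. by have := hl a x 0; rewrite !addr0 linP0 addr0. Qed.

Lemma linPN x : h (- x) = - h x.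
Proof. by rewrite -scaleN1r linPZ scaleN1r. Qed.

Lemma linPB x y : h (x - y) = h x - h y.
Proof. by rewrite linPD linPN. Qed.

Lemma linP_sum (I : Type) (s : seq I) (P : pred I) (F : I -> V) :
  h (\sum_(i <- s | P i) F i) = \sum_(i <- s | P i) h (F i).
Proof.
elim: s => [|i s IH]; first by rewrite !big_nil linP0.
by rewrite !big_cons; case: (P i); rewrite ?linPD IH.
Qed.

End LinP.

Section FSum.

Lemma fsumT (V : nmodType) (T : choiceType) (s : seq T) (f : T -> V) :
  (forall a, a \notin s -> f a = 0) ->
  \sum_(a \in [set: T]) f a = \sum_(a <- undup s) f a.
Proof.
move=> hs; rewrite (fsbigTE [fset a | a in s]%fset) //; last first.
  by move=> i; rewrite inE /= => /hs.
apply: perm_big; apply: uniq_perm; rewrite ?fset_uniq ?undup_uniq //.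
by move=> i; rewrite mem_undup; rewrite !inE.
Qed.

Lemma fsumT_sub (V : nmodType) (T : choiceType) (s : seq T) (f : T -> V) :
  uniq s -> (forall a, a \notin s -> f a = 0) ->
  \sum_(a \in [set: T]) f a = \sum_(a <- s) f a.
Proof. by move=> us hs; rewrite (fsumT hs) undup_id. Qed.

Lemma fsum_reindex (V : nmodType) (T : choiceType) (g : T -> T) (f : T -> V) :
  bijective g -> \sum_(a \in [set: T]) f (g a) = \sum_(a \in [set: T]) f a.
Proof. by move=> bg; rewrite (reindex_fsbigT g f bg). Qed.

Lemma fsum1 (V : nmodType) (T : choiceType) (b : T) (f : T -> V) :
  (forall a, a != b -> f a = 0) -> \sum_(a \in [set: T]) f a = f b.
Proof.
move=> hb; rewrite (@fsumT_sub _ _ [:: b]) ?big_seq1 //.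
by move=> a; rewrite inE => /hb.
Qed.

Lemma sum_supp (V : nmodType) (T : eqType) (s s' : seq T) (f : T -> V) :
  uniq s -> uniq s' -> (forall a, a \notin s -> f a = 0) ->
  (forall a, a \notin s' -> f a = 0) ->
  \sum_(a <- s) f a = \sum_(a <- s') f a.
Proof.
move=> us us' hs hs'.
rewrite (bigID (fun a => a \in s')) /= [X in _ + X]big1 ?addr0; last first.
  by move=> a /hs'.
rewrite [RHS](bigID (fun a => a \in s)) /= [X in _ + X]big1 ?addr0; last first.
  by move=> a /hs.
rewrite -big_filter -[RHS]big_filter; apply: perm_big.
apply: uniq_perm; rewrite ?filter_uniq // => a; rewrite !mem_filter andbC //.
Qed.

Lemma fsum_nz (V : nmodType) (T : choiceType) (f : T -> V) :
  \sum_(a \in [set: T]) f a != 0 -> exists a, f a != 0.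
Proof.
move=> h; apply: contra_notP (negP h) => hn; apply/eqP; apply: fsbig1 => a _.
by apply/eqP; apply: contra_notT hn => ha; exists a.
Qed.

Lemma fsum_exchange (V : nmodType) (T1 T2 : choiceType) (Tf : T1 -> T2 -> V)
  (s1 : seq T1) (s2 : seq T2) :
  (forall i j, Tf i j != 0 -> (i \in s1) && (j \in s2)) ->
  \sum_(i \in [set: T1]) \sum_(j \in [set: T2]) Tf i j =
  \sum_(j \in [set: T2]) \sum_(i \in [set: T1]) Tf i j.
Proof.
move=> h.
have h2 i : forall j, j \notin s2 -> Tf i j = 0.
  by move=> j hj; apply/eqP; apply: contraNT hj => /h /andP[].
have h1 j : forall i, i \notin s1 -> Tf i j = 0.
  by move=> i hi; apply/eqP; apply: contraNT hi => /h /andP[].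
rewrite (@fsumT _ _ s1); last first.
  by move=> i hi; apply: fsbig1 => j _; apply: h1.
rewrite [RHS](@fsumT _ _ s2); last first.
  by move=> j hj; apply: fsbig1 => i _; apply: h2.
under eq_bigr => i _ do rewrite (@fsumT _ _ s2 _ (h2 i)).
under [RHS]eq_bigr => j _ do rewrite (@fsumT _ _ s1 _ (h1 j)).
exact: exchange_big.
Qed.

Lemma fsumD (V : nmodType) (T : choiceType) (f g : T -> V) (s1 s2 : seq T) :
  (forall a, a \notin s1 -> f a = 0) -> (forall a, a \notin s2 -> g a = 0) ->
  \sum_(a \in [set: T]) (f a + g a) =
  \sum_(a \in [set: T]) f a + \sum_(a \in [set: T]) g a.
Proof.
move=> h1 h2.
have h1' a : a \notin s1 ++ s2 -> f a = 0 by rewrite mem_cat negb_or => /andP[/h1].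
have h2' a : a \notin s1 ++ s2 -> g a = 0 by rewrite mem_cat negb_or => /andP[_ /h2].
rewrite (fsumT h1') (fsumT h2') (@fsumT _ _ (s1 ++ s2)) ?big_split //.
by move=> a ha; rewrite h1' ?h2' ?addr0.
Qed.

End FSum.

Lemma fsum_linP (k : comPzRingType) (V W : lmodType k) (phi : V -> W)
  (hphi : linP phi) (T : choiceType) (Y : T -> V) (s : seq T) :
  (forall a, a \notin s -> Y a = 0) ->
  \sum_(a \in [set: T]) phi (Y a) = phi (\sum_(a \in [set: T]) Y a).
Proof.
move=> h; rewrite (fsumT h) (@fsumT _ _ s) ?linP_sum //.
by move=> a /h ->; rewrite linP0.
Qed.

Lemma linP_comp (k : comPzRingType) (U V W : lmodType k) (f : U -> V) (g : V -> W) :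
  linP f -> linP g -> linP (fun u => g (f u)).
Proof. by move=> hf hg a x y; rewrite hf hg. Qed.

Lemma linP_linear (k : comPzRingType) (V W : lmodType k) (f : {linear V -> W}) :
  linP f.
Proof. by move=> a x y; rewrite linearD linearZ. Qed.

Section Cat.
Variable k : comPzRingType.
Variable C : precat k.

Definition eqh (x y : obj C) (e : x = y) : hom C x y := castH erefl e (idm x).

Lemma eqh_pi (x y : obj C) (e e' : x = y) : eqh e = eqh e'.
Proof. by rewrite (Prop_irrelevance e e'). Qed.

Lemma eqh_id (x : obj C) (e : x = x) : eqh e = idm x.
Proof. by rewrite (Prop_irrelevance e erefl). Qed.


Variable HC : is_cat C.

Lemma compA (x y z w : obj C) (h : hom C z w) (g : hom C y z) (f : hom C x y) :
  comp h (comp g f) = comp (comp h g) f.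
Proof. by case: HC. Qed.

Lemma comp1l (x y : obj C) (f : hom C x y) : comp (idm y) f = f.
Proof. by case: HC. Qed.

Lemma comp1r (x y : obj C) (f : hom C x y) : comp f (idm x) = f.
Proof. by case: HC. Qed.

Lemma compl_lin (x y z : obj C) (f : hom C x y) :
  linP (fun g : hom C y z => comp g f).
Proof. by case: HC => _ _ _ h _ a g1 g2; rewrite h. Qed.

Lemma compr_lin (x y z : obj C) (g : hom C y z) :
  linP (fun f : hom C x y => comp g f).
Proof. by case: HC => _ _ _ _ h a f1 f2; rewrite h. Qed.

Lemma comp0l (x y z : obj C) (f : hom C x y) : comp (0 : hom C y z) f = 0.
Proof. exact: (linP0 (@compl_lin x y z f)). Qed.

Lemma comp0r (x y z : obj C) (g : hom C y z) : comp g (0 : hom C x y) = 0.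
Proof. exact: (linP0 (@compr_lin x y z g)). Qed.

Lemma compDl (x y z : obj C) (g1 g2 : hom C y z) (f : hom C x y) :
  comp (g1 + g2) f = comp g1 f + comp g2 f.
Proof. exact: (linPD (@compl_lin x y z f)). Qed.

Lemma compDr (x y z : obj C) (g : hom C y z) (f1 f2 : hom C x y) :
  comp g (f1 + f2) = comp g f1 + comp g f2.
Proof. exact: (linPD (@compr_lin x y z g)). Qed.

Lemma compZl (x y z : obj C) a (g : hom C y z) (f : hom C x y) :
  comp (a *: g) f = a *: comp g f.
Proof. exact: (linPZ (@compl_lin x y z f)). Qed.

Lemma compZr (x y z : obj C) a (g : hom C y z) (f : hom C x y) :
  comp g (a *: f) = a *: comp g f.
Proof. exact: (linPZ (@compr_lin x y z g)). Qed.

Lemma comp_suml (x y z : obj C) (I : Type) (s : seq I) (P : pred I)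
  (F : I -> hom C y z) (f : hom C x y) :
  comp (\sum_(i <- s | P i) F i) f = \sum_(i <- s | P i) comp (F i) f.
Proof. exact: (linP_sum (@compl_lin x y z f)). Qed.

Lemma comp_sumr (x y z : obj C) (I : Type) (s : seq I) (P : pred I)
  (g : hom C y z) (F : I -> hom C x y) :
  comp g (\sum_(i <- s | P i) F i) = \sum_(i <- s | P i) comp g (F i).
Proof. exact: (linP_sum (@compr_lin x y z g)). Qed.

Lemma castH_eqh (x x' y y' : obj C) (e1 : x = x') (e2 : y = y') (f : hom C x y) :
  castH e1 e2 f = comp (eqh e2) (comp f (eqh (esym e1))).
Proof. by case: x' / e1; case: y' / e2; rewrite /eqh /= comp1l comp1r. Qed.

Lemma eqh_comp (x y z : obj C) (e1 : x = y) (e2 : y = z) :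
  comp (eqh e2) (eqh e1) = eqh (etrans e1 e2).
Proof. by case: z / e2; case: y / e1; rewrite /= comp1l. Qed.

Lemma eqh_nat (T : Type) (P Q : T -> obj C) (h : forall z, hom C (P z) (Q z))
  (z z' : T) (e : z = z') :
  comp (eqh (f_equal Q e)) (h z) = comp (h z') (eqh (f_equal P e)).
Proof. by case: z' / e; rewrite /= comp1l comp1r. Qed.

Lemma eqhK (x y : obj C) (e : x = y) : comp (eqh (esym e)) (eqh e) = idm x.
Proof. by rewrite eqh_comp eqh_id. Qed.

Lemma eqhKV (x y : obj C) (e : x = y) : comp (eqh e) (eqh (esym e)) = idm y.
Proof. by rewrite eqh_comp eqh_id. Qed.

Lemma iso_eqh (x y : obj C) (e : x = y) : is_iso (eqh e).
Proof. by exists (eqh (esym e)); rewrite eqhK eqhKV. Qed.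

Lemma iso_comp (x y z : obj C) (g : hom C y z) (f : hom C x y) :
  is_iso g -> is_iso f -> is_iso (comp g f).
Proof.
move=> [g' [g1 g2]] [f' [f1 f2]]; exists (comp f' g'); split.
  by rewrite compA -(compA f') g1 comp1r.
by rewrite compA -(compA g) f2 comp1r.
Qed.

Lemma iso_id (x : obj C) : is_iso (idm x).
Proof. by exists (idm x); rewrite comp1l. Qed.

Lemma iso_inv (x y : obj C) (f : hom C x y) (hf : is_iso f) :
  {g : hom C y x | comp g f = idm x /\ comp f g = idm y}.
Proof. exact: constructive_indefinite_description hf. Qed.

Lemma iso_sym (x y : obj C) (f : hom C x y) (g : hom C y x) :
  comp g f = idm x -> comp f g = idm y -> is_iso g.
Proof. by move=> h1 h2; exists f. Qed.

Lemma iso_cancel_l (x y z : obj C) (f : hom C y z) (g h : hom C x y) :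
  is_iso f -> comp f g = comp f h -> g = h.
Proof.
move=> [f' [f1 _]] e; rewrite -(comp1l g) -(comp1l h) -f1 -!compA.
by rewrite e.
Qed.

Lemma iso_cancel_r (x y z : obj C) (f : hom C x y) (g h : hom C y z) :
  is_iso f -> comp g f = comp h f -> g = h.
Proof.
move=> [f' [_ f2]] e; rewrite -(comp1r g) -(comp1r h) -f2 !compA.
by rewrite e.
Qed.

Lemma castH_l (x y y' : obj C) (e : y = y') (f : hom C x y) :
  castH erefl e f = comp (eqh e) f.
Proof. by rewrite castH_eqh comp1r. Qed.

Lemma iso_of_inv (x y : obj C) (f : hom C x y) (g : hom C y x) (h : hom C x y) :
  comp g f = idm x -> comp h g = idm y -> is_iso f.
Proof.
move=> gf hg; exists g; split => //.
have -> : f = h by rewrite -(comp1r h) -gf compA hg comp1l.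
exact: hg.
Qed.

Lemma fsum_compl (x y z : obj C) (T : choiceType) (s : seq T)
  (F : T -> hom C y z) (f : hom C x y) :
  (forall a, a \notin s -> F a = 0) ->
  comp (\sum_(a \in [set: T]) F a) f = \sum_(a \in [set: T]) comp (F a) f.
Proof. by move=> h; rewrite (@fsum_linP _ _ _ _ (@compl_lin x y z f) _ _ s). Qed.

Lemma fsum_compr (x y z : obj C) (T : choiceType) (s : seq T)
  (g : hom C y z) (F : T -> hom C x y) :
  (forall a, a \notin s -> F a = 0) ->
  comp g (\sum_(a \in [set: T]) F a) = \sum_(a \in [set: T]) comp g (F a).
Proof. by move=> h; rewrite (@fsum_linP _ _ _ _ (@compr_lin x y z g) _ _ s). Qed.

End Cat.
Arguments eqh {k C x y}.

Section Func.
Variables (k : comPzRingType) (C D : precat k) (F : functor C D).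
Hypothesis HF : is_functor F.

Lemma fmapM (x y z : obj C) (g : hom C y z) (f : hom C x y) :
  fmap F (comp g f) = comp (fmap F g) (fmap F f).
Proof. by case: HF. Qed.

Lemma fmap1 (x : obj C) : fmap F (idm x) = idm (fobj F x).
Proof. by case: HF. Qed.

Lemma fmap_lin (x y : obj C) : linP (fun f : hom C x y => fmap F f).
Proof. by case: HF => _ _ h a f g; rewrite h. Qed.

Lemma fmap0 (x y : obj C) : fmap F (0 : hom C x y) = 0.
Proof. exact: (linP0 (@fmap_lin x y)). Qed.

Lemma fmapD (x y : obj C) (f g : hom C x y) : fmap F (f + g) = fmap F f + fmap F g.
Proof. exact: (linPD (@fmap_lin x y)). Qed.

Lemma fmapZ (x y : obj C) a (f : hom C x y) : fmap F (a *: f) = a *: fmap F f.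
Proof. exact: (linPZ (@fmap_lin x y)). Qed.

Lemma fmap_sum (x y : obj C) (I : Type) (s : seq I) (P : pred I) (Fi : I -> hom C x y) :
  fmap F (\sum_(i <- s | P i) Fi i) = \sum_(i <- s | P i) fmap F (Fi i).
Proof. exact: (linP_sum (@fmap_lin x y)). Qed.

Lemma fmap_fsum (x y : obj C) (T : choiceType) (s : seq T) (Fi : T -> hom C x y) :
  (forall a, a \notin s -> Fi a = 0) ->
  fmap F (\sum_(a \in [set: T]) Fi a) = \sum_(a \in [set: T]) fmap F (Fi a).
Proof. by move=> h; rewrite (@fsum_linP _ _ _ _ (@fmap_lin x y) _ _ s). Qed.

Lemma fmap_eqh (x y : obj C) (e : x = y) : fmap F (eqh e) = eqh (f_equal (fobj F) e).
Proof. by case: y / e; rewrite /= fmap1. Qed.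

Lemma fmap_iso (x y : obj C) (f : hom C x y) : is_iso f -> is_iso (fmap F f).
Proof.
by move=> [g [g1 g2]]; exists (fmap F g); rewrite -!fmapM g1 g2 !fmap1.
Qed.

End Func.

Lemma functor_eta (k : comPzRingType) (C D : precat k) (F : functor C D) :
  F = @Functor k C D (fobj F) (@fmap k C D F).
Proof. by case: F. Qed.

Lemma ginvf_eta (k : comPzRingType) (G : group) (C : precat k) (A : gaction G C)
  (D : precat k) (F : ginvf A D) : F = @GInv k G C A D (gfun F) (gadj F).
Proof. by case: F. Qed.

Lemma ginvf_ext (k : comPzRingType) (G : group) (C : precat k) (A : gaction G C)
  (D : precat k) (F : ginvf A D)
  (fm : forall x y, hom C x y -> hom D (fobj (gfun F) x) (fobj (gfun F) y))
  (ch : forall a x, hom D (fobj (gfun F) x) (fobj (gfun F) (act A a x))) :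
  fm = @fmap _ _ _ (gfun F) -> ch = gadj F ->
  @GInv k G C A D (@Functor k C D (fobj (gfun F)) fm) ch = F.
Proof. by case: F fm ch => [[fo fmo] cho] fm ch /= -> ->. Qed.

Section AdjIso.
Variables (k : comPzRingType) (G : group) (C : precat k) (A : gaction G C).
Variables (D : precat k) (HD : is_cat D) (Fo : obj C -> obj D).
Variable psi : forall (a : G) (x : obj C), hom D (Fo x) (Fo (act A a x)).
Hypothesis h3 : forall x, psi (gone G) x = eqh (f_equal Fo (esym (act1 A x))).
Hypothesis h4 : forall a b x, comp (psi b (act A a x)) (psi a x) =
                     comp (eqh (f_equal Fo (actM A a b x))) (psi (gmul b a) x).

Lemma psi_tr (c c' : G) (e : c = c') x :
  psi c' x = comp (eqh (f_equal (fun c => Fo (act A c x)) e)) (psi c x).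
Proof. by case: c' / e; rewrite comp1l. Qed.

Lemma psi_left a x : exists e, comp (psi (ginvg a) (act A a x)) (psi a x) = eqh e.
Proof.
rewrite h4 (psi_tr (esym (gmulVg a))) h3 !eqh_comp //; by eexists.
Qed.

Lemma psi_iso a x : is_iso (psi a x).
Proof.
have [e1 E1] := psi_left a x.
have [e2 E2] := psi_left (ginvg a) (act A a x).
pose L := comp (eqh (esym e1)) (psi (ginvg a) (act A a x)).
pose M := comp (comp (eqh (esym e2)) (psi (ginvg (ginvg a)) (act A (ginvg a) (act A a x))))
               (eqh e1).
apply: (@iso_of_inv _ _ HD _ _ _ L M).
  by rewrite /L -compA // E1 eqhK.
rewrite /M /L -!compA // (compA _ (eqh e1)) // eqhKV // comp1l // E2 eqhK //.
Qed.

End AdjIso.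

Section OrbitB.
Variables (k : comPzRingType) (G : group) (C : precat k) (A : gaction G C).
Hypotheses (HC : is_cat C) (HA : is_gcat A).
Local Notation "a \* b" := (gmul a b) (at level 40, left associativity).
Local Notation "1g" := (gone G).

Lemma actmM (a : G) (x y z : obj C) (g : hom C y z) (f : hom C x y) :
  actm A a (comp g f) = comp (actm A a g) (actm A a f).
Proof. by case: HA. Qed.

Lemma actm1 (a : G) (x : obj C) : actm A a (idm x) = idm (act A a x).
Proof. by case: HA. Qed.

Lemma actm_one (x y : obj C) (f : hom C x y) :
  actm A 1g f = comp (eqh (esym (act1 A y))) (comp f (eqh (act1 A x))).
Proof.
by case: HA => _ _ h _; rewrite h castH_eqh // (eqh_pi (esym (esym _)) (act1 A x)).
Qed.

Lemma actm_mul (a b : G) (x y : obj C) (f : hom C x y) :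
  actm A (b \* a) f =
  comp (eqh (esym (actM A a b y))) (comp (actm A b (actm A a f)) (eqh (actM A a b x))).
Proof.
by case: HA => _ _ _ h; rewrite h castH_eqh // (eqh_pi (esym (esym _)) (actM A a b x)).
Qed.

Lemma actm_eqh (a : G) (x y : obj C) (e : x = y) :
  actm A a (eqh e) = eqh (f_equal (act A a) e).
Proof. by case: y / e; rewrite /= actm1. Qed.

Lemma actm0 (a : G) (x y : obj C) : actm A a (0 : hom C x y) = 0.
Proof. exact: linear0. Qed.

Lemma actm_lin (a : G) (x y : obj C) : linP (fun f : hom C x y => actm A a f).
Proof. exact: linP_linear. Qed.

Lemma ftr (x y : obj C) (f : ofam A x y) (b b' a a' : G) (eb : b = b') (ea : a = a') :
  f (b', a') = comp (eqh (f_equal (fun c => act A c y) eb))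
                    (comp (f (b, a)) (eqh (f_equal (fun c => act A c x) (esym ea)))).
Proof. by case: b' / eb; case: a' / ea; rewrite /= comp1l // comp1r. Qed.

Lemma eqv (x y : obj C) (f : ofam A x y) : orbit_prop f ->
  forall c b a, f (c \* b, c \* a) =
    comp (eqh (esym (actM A b c y))) (comp (actm A c (f (b, a))) (eqh (actM A a c x))).
Proof.
case=> _ _ h c b a; rewrite h castH_eqh //.
by rewrite (eqh_pi (esym (esym _)) (actM A a c x)).
Qed.

Lemma omkE (x y : obj C) (f : ofam A x y) : orbit_prop f -> proj1_sig (omk f) = f.
Proof. by move=> h; rewrite /omk; case: pselect. Qed.

Definition ent (x y : obj C) (f : orbhom A x y) (b a : G) : hom C (act A a x) (act A b y) :=
  proj1_sig f (b, a).

Lemma ent_ext (x y : obj C) (f g : orbhom A x y) : (forall b a, ent f b a = ent g b a) -> f = g.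
Proof. by move=> h; apply: orb_eq => -[b a]; apply: h. Qed.

Definition cfam (x y z : obj C) (g : ofam A y z) (f : ofam A x y) : ofam A x z :=
  fun p => \sum_(b \in [set: G])
    (comp (g (p.1, b)) (f (b, p.2)) : hom C (act A p.2 x) (act A p.1 z)).

Lemma gmul_bij (c : G) : bijective (gmul c).
Proof. by exists (gmul (ginvg c)) => a; rewrite ?gmulKg ?gmulKVg. Qed.

Lemma orbit_comp (x y z : obj C) (g : ofam A y z) (f : ofam A x y) :
  orbit_prop g -> orbit_prop f -> orbit_prop (cfam g f).
Proof.
move=> hg hf; move: (hg) (hf) => [cg rg _] [cf rf _].
have [sg Hsg] := choice cg; have [sf Hsf] := choice rf.
have nz c a b : comp (g (c, b)) (f (b, a)) != 0 -> g (c, b) != 0 /\ f (b, a) != 0.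
  move=> h; split; apply: contraNneq h => ->; by rewrite ?comp0l ?comp0r.
split.
- move=> a; case: (cf a) => s hs; exists (flatten (map sg s)) => c.
  move=> /fsum_nz [b /nz [/Hsg h1 /hs h2]].
  by apply/flattenP; exists (sg b) => //; apply: map_f.
- move=> c; case: (rg c) => s hs; exists (flatten (map sf s)) => a.
  move=> /fsum_nz [b /nz [/hs h1 /Hsf h2]].
  by apply/flattenP; exists (sf b) => //; apply: map_f.
- move=> c b a; rewrite /cfam /=.
  rewrite -(@fsum_reindex (hom C (act A (c \* a) x) (act A (c \* b) z)) _ _ (fun d => comp (g (c \* b, d)) (f (d, c \* a))) (gmul_bij c)).
  case: (cf a) => s hs.
  pose Phi (h : hom C (act A a x) (act A b z)) :=
    comp (eqh (esym (actM A b c z))) (comp (actm A c h) (eqh (actM A a c x))).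
  have lPhi : linP Phi.
    by move=> r u v; rewrite /Phi linearD linearZ /= compDl // compZl // compDr // compZr.
  rewrite castH_eqh // (eqh_pi (esym (esym _)) (actM A a c x)).
  match goal with |- _ = ?R => change R with (Phi (\sum_(d \in [set: G]) (comp (g (b, d)) (f (d, a)) : hom C (act A a x) (act A b z)))) end.
  rewrite -(@fsum_linP _ _ _ Phi lPhi _ _ s); last first.
    by move=> d hd; apply/eqP; apply: contraNT hd => /nz [_ /hs].
  apply: eq_fsbigr => d _; rewrite (eqv hg) (eqv hf) /Phi actmM.
  by rewrite !compA // -(compA _ _ (eqh (actM A d c y))) ?eqhKV // comp1r // -!compA.
Qed.

Lemma ocompE (x y z : obj C) (g : orbhom A y z) (f : orbhom A x y) (b a : G) :
  ent (ocomp g f) b a = \sum_(c \in [set: G]) (comp (ent g b c) (ent f c a) : hom C _ _).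
Proof.
rewrite /ent; change (proj1_sig (omk (cfam (proj1_sig g) (proj1_sig f))) (b, a) =
  cfam (proj1_sig g) (proj1_sig f) (b, a)).
by rewrite omkE //; apply: orbit_comp; [exact: (proj2_sig g)|exact: (proj2_sig f)].
Qed.

Definition idfam (x : obj C) : ofam A x x := fun p : G * G =>
    match pselect (p.2 = p.1) with
    | left e => castH erefl (f_equal (fun c => act A c x) e) (idm (act A p.2 x))
    | right _ => 0
    end.

Lemma idfam_eq (x : obj C) b : (idfam x (b, b) : hom C (act A b x) (act A b x)) = idm (act A b x).
Proof. by rewrite /idfam /=; case: pselect => // e; apply: eqh_id. Qed.

Lemma idfam_neq (x : obj C) b a : a != b -> (idfam x (b, a) : hom C (act A a x) (act A b x)) = 0.
Proof. by move=> /eqP ne; rewrite /idfam /=; case: pselect. Qed.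

Lemma castH_ee (x x' : obj C) (e1 e2 : x = x') (f : hom C x x) :
  f = idm x -> castH e1 e2 f = idm x'.
Proof.
by move=> ->; rewrite castH_eqh // comp1l // eqh_comp // eqh_id.
Qed.

Lemma orbit_id (x : obj C) : orbit_prop (idfam x).
Proof.
split.
- move=> a; exists [:: a] => b; apply: contraR; rewrite inE => ne.
  by rewrite idfam_neq // eq_sym.
- move=> b; exists [:: b] => a; apply: contraR; rewrite inE => ne.
  by rewrite idfam_neq.
- move=> c b a; case: (eqVneq a b) => [->|ne].
    by rewrite !idfam_eq actm1; apply/esym/castH_ee.
  rewrite !idfam_neq ?actm0 ?castH0 //.
  by apply: contra ne => /eqP /gmulI ->.
Qed.

Lemma oidE (x : obj C) b a : ent (oid A x) b a = (idfam x (b, a) : hom C (act A a x) (act A b x)).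
Proof. by rewrite /ent /oid; change (proj1_sig (omk (idfam x)) (b, a) = idfam x (b, a)); rewrite omkE //; apply: orbit_id. Qed.

Definition Pfam (x y : obj C) (f : hom C x y) : ofam A x y := fun p : G * G =>
      match pselect (p.2 = p.1) with
      | left e => castH erefl (f_equal (fun c => act A c y) e) (actm A p.2 f)
      | right _ => 0
      end.

Lemma Pfam_eq (x y : obj C) (f : hom C x y) b : (Pfam f (b, b) : hom C (act A b x) (act A b y)) = actm A b f.
Proof.
rewrite /Pfam /=; case: pselect => // e.
by rewrite (Prop_irrelevance e erefl).
Qed.

Lemma Pfam_neq (x y : obj C) (f : hom C x y) b a : a != b -> (Pfam f (b, a) : hom C (act A a x) (act A b y)) = 0.
Proof. by move=> /eqP ne; rewrite /Pfam /=; case: pselect. Qed.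

Lemma orbit_P (x y : obj C) (f : hom C x y) : orbit_prop (Pfam f).
Proof.
split.
- move=> a; exists [:: a] => b; apply: contraR; rewrite inE => ne.
  by rewrite Pfam_neq // eq_sym.
- move=> b; exists [:: b] => a; apply: contraR; rewrite inE => ne.
  by rewrite Pfam_neq.
- move=> c b a; case: (eqVneq a b) => [->|ne].
    rewrite !Pfam_eq actm_mul castH_eqh //.
    rewrite (eqh_pi (esym (esym _)) (actM A b c x)) //.
  rewrite !Pfam_neq ?actm0 ?castH0 //.
  by apply: contra ne => /eqP /gmulI ->.
Qed.

Lemma PE (x y : obj C) (f : hom C x y) b a : ent (fmap (orbitP A) f) b a = (Pfam f (b, a) : hom C (act A a x) (act A b y)).
Proof. by rewrite /ent; change (proj1_sig (omk (Pfam f)) (b, a) = Pfam f (b, a)); rewrite omkE //; apply: orbit_P. Qed.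

Definition phifam (mu : G) (x : obj C) : ofam A x (act A mu x) := fun p : G * G =>
    match pselect (p.2 = gmul p.1 mu) with
    | left e => castH erefl
                  (etrans (f_equal (fun c => act A c x) e) (actM A mu p.1 x))
                  (idm (act A p.2 x))
    | right _ => 0
    end.

Lemma phifam_eq mu (x : obj C) b : (phifam mu x (b, b \* mu) : hom C (act A (b \* mu) x) (act A b (act A mu x))) = eqh (actM A mu b x).
Proof. by rewrite /phifam /=; case: pselect => // e; apply: eqh_pi. Qed.

Lemma phifam_neq mu (x : obj C) b a : a != b \* mu -> (phifam mu x (b, a) : hom C (act A a x) (act A b (act A mu x))) = 0.
Proof. by move=> /eqP ne; rewrite /phifam /=; case: pselect. Qed.

Lemma orbit_phifam mu (x : obj C) : orbit_prop (phifam mu x).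
Proof.
split.
- move=> a; exists [:: a \* ginvg mu] => b; apply: contraR; rewrite inE => ne.
  rewrite phifam_neq //; apply: contra ne => /eqP ->.
  by rewrite -gmulA gmulV gmulg1.
- move=> b; exists [:: b \* mu] => a; apply: contraR; rewrite inE => ne.
  by rewrite phifam_neq.
- move=> c b a; case: (eqVneq a (b \* mu)) => [->|ne].
    rewrite (ftr (phifam mu x) (erefl (c \* b)) (esym (gmulA c b mu))) !phifam_eq.
    rewrite actm_eqh castH_eqh // !eqh_comp //; apply: eqh_pi.
  rewrite !phifam_neq ?actm0 ?castH0 //.
  by apply: contra ne => /eqP; rewrite -gmulA => /gmulI ->.
Qed.

Lemma phiE mu (x : obj C) b a : ent (orbit_phi A mu x) b a = (phifam mu x (b, a) : hom C (act A a x) (act A b (act A mu x))).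
Proof. by rewrite /ent; change (proj1_sig (omk (phifam mu x)) (b, a) = phifam mu x (b, a)); rewrite omkE //; apply: orbit_phifam. Qed.


Lemma oid_eq (x : obj C) b : ent (oid A x) b b = idm (act A b x).
Proof. by rewrite oidE; rewrite -> idfam_eq. Qed.
Lemma oid_neq (x : obj C) b a : a != b -> ent (oid A x) b a = 0.
Proof. by move=> ne; rewrite oidE; rewrite -> idfam_neq. Qed.
Lemma P_eq (x y : obj C) (f : hom C x y) b : ent (fmap (orbitP A) f) b b = actm A b f.
Proof. by rewrite PE; rewrite -> Pfam_eq. Qed.
Lemma P_neq (x y : obj C) (f : hom C x y) b a : a != b -> ent (fmap (orbitP A) f) b a = 0.
Proof. by move=> ne; rewrite PE; rewrite -> Pfam_neq. Qed.
Lemma phi_eq mu (x : obj C) b : ent (orbit_phi A mu x) b (b \* mu) = eqh (actM A mu b x).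
Proof. by rewrite phiE; rewrite -> phifam_eq. Qed.
Lemma phi_neq mu (x : obj C) b a : a != b \* mu -> ent (orbit_phi A mu x) b a = 0.
Proof. by move=> ne; rewrite phiE; rewrite -> phifam_neq. Qed.
Lemma entD (x y : obj C) (f g : orbhom A x y) b a : ent (f + g) b a = ent f b a + ent g b a.
Proof. by []. Qed.
Lemma entZ (x y : obj C) r (f : orbhom A x y) b a : ent (r *: f) b a = r *: ent f b a.
Proof. by []. Qed.
Lemma ent0 (x y : obj C) b a : ent (0 : orbhom A x y) b a = 0.
Proof. by []. Qed.

Lemma ent_sum (x y : obj C) (I : Type) (s : seq I) (P : pred I) (F : I -> orbhom A x y) b a :
  ent (\sum_(i <- s | P i) F i) b a = \sum_(i <- s | P i) ent (F i) b a.
Proof.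
elim: s => [|i s IH]; first by rewrite !big_nil.
by rewrite !big_cons; case: (P i); rewrite ?entD IH.
Qed.

Lemma ent_fsum (x y : obj C) (I : choiceType) (s : seq I) (F : I -> orbhom A x y) b a :
  (forall i, i \notin s -> F i = 0) ->
  ent (\sum_(i \in [set: I]) F i) b a = \sum_(i \in [set: I]) ent (F i) b a.
Proof.
move=> h; rewrite (fsumT h) ent_sum (@fsumT _ _ s) //.
by move=> i /h ->.
Qed.

Lemma colfin (x y : obj C) (f : orbhom A x y) a :
  exists s : seq G, forall b, b \notin s -> ent f b a = 0.
Proof.
case: (proj2_sig f) => h _ _; case: (h a) => s hs; exists s => b hb.
by apply/eqP; apply: contraNT hb => /hs.
Qed.

Lemma rowfin (x y : obj C) (f : orbhom A x y) b :
  exists s : seq G, forall a, a \notin s -> ent f b a = 0.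
Proof.
case: (proj2_sig f) => _ h _; case: (h b) => s hs; exists s => a ha.
by apply/eqP; apply: contraNT ha => /hs.
Qed.

Lemma ent_eqv (x y : obj C) (f : orbhom A x y) c b a :
  ent f (c \* b) (c \* a) =
    comp (eqh (esym (actM A b c y))) (comp (actm A c (ent f b a)) (eqh (actM A a c x))).
Proof. exact: (eqv (proj2_sig f)). Qed.

Lemma ocompA (x y z w : obj C) (h : orbhom A z w) (g : orbhom A y z) (f : orbhom A x y) :
  ocomp h (ocomp g f) = ocomp (ocomp h g) f.
Proof.
apply: ent_ext => b a; rewrite !ocompE.
have [rh Hrh] := rowfin h b; have [cf Hcf] := colfin f a.
transitivity (\sum_(c <- undup rh) \sum_(d <- undup cf)
   (comp (ent h b c) (comp (ent g c d) (ent f d a)) : hom C _ _)).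
  rewrite (@fsumT _ _ rh); last by move=> c /Hrh ->; rewrite comp0l.
  apply: eq_bigr => c _; rewrite ocompE (@fsumT _ _ cf) ?comp_sumr //.
  by move=> d /Hcf ->; rewrite comp0r.
rewrite exchange_big /= (@fsumT _ _ cf); last by move=> d /Hcf ->; rewrite comp0r.
apply: eq_bigr => d _; rewrite ocompE (@fsumT _ _ rh) ?comp_suml //.
  by apply: eq_bigr => c _; rewrite compA.
by move=> c /Hrh ->; rewrite comp0l.
Qed.

Lemma ocomp1l (x y : obj C) (f : orbhom A x y) : ocomp (oid A y) f = f.
Proof.
apply: ent_ext => b a; rewrite ocompE (@fsum1 _ _ b).
  by rewrite /= oid_eq comp1l.
by move=> c ne; rewrite oid_neq // comp0l.
Qed.

Lemma ocomp1r (x y : obj C) (f : orbhom A x y) : ocomp f (oid A x) = f.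
Proof.
apply: ent_ext => b a; rewrite ocompE (@fsum1 _ _ a).
  by rewrite /= oid_eq comp1r.
by move=> c ne; rewrite oid_neq 1?eq_sym // comp0r.
Qed.

Lemma ocomp_linl (x y z : obj C) r (g1 g2 : orbhom A y z) (f : orbhom A x y) :
  ocomp (r *: g1 + g2) f = r *: ocomp g1 f + ocomp g2 f.
Proof.
apply: ent_ext => b a; rewrite entD entZ !ocompE.
have [cf Hcf] := colfin f a.
have H0 (g : orbhom A y z) c : c \notin cf -> comp (ent g b c) (ent f c a) = 0.
  by move=> /Hcf ->; rewrite comp0r.
rewrite !(@fsumT _ _ cf); try by move=> c /Hcf ->; rewrite comp0r.
rewrite scaler_sumr -big_split; apply: eq_bigr => c _.
by rewrite [in LHS]/ent /= compDl // compZl.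
Qed.

Lemma ocomp_linr (x y z : obj C) r (g : orbhom A y z) (f1 f2 : orbhom A x y) :
  ocomp g (r *: f1 + f2) = r *: ocomp g f1 + ocomp g f2.
Proof.
apply: ent_ext => b a; rewrite entD entZ !ocompE.
have [rg Hrg] := rowfin g b.
rewrite !(@fsumT _ _ rg); try by move=> c /Hrg ->; rewrite comp0l.
rewrite scaler_sumr -big_split; apply: eq_bigr => c _.
by rewrite [in LHS]/ent /= compDr // compZr.
Qed.

Lemma orbit_is_cat : is_cat (orbit_cat A).
Proof.
split.
- by move=> x y z w h g f; apply: ocompA.
- by move=> x y f; apply: ocomp1l.
- by move=> x y f; apply: ocomp1r.
- by move=> x y z r g1 g2 f; apply: ocomp_linl.
- by move=> x y z r g f1 f2; apply: ocomp_linr.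
Qed.


Lemma ent_castH (x x' y y' : obj C) (e1 : x = x') (e2 : y = y')
  (f : hom (orbit_cat A) x y) b a :
  ent (@castH _ (orbit_cat A) _ _ _ _ e1 e2 f) b a =
  comp (eqh (f_equal (act A b) e2)) (comp (ent f b a) (eqh (f_equal (act A a) (esym e1)))).
Proof. by case: x' / e1; case: y' / e2; rewrite /= /eqh /= comp1l // comp1r. Qed.

Lemma P_functor : is_functor (orbitP A).
Proof.
split.
- move=> x y z g f; apply: ent_ext => b a; rewrite ocompE (@fsum1 _ _ b) /=.
    case: (eqVneq a b) => [->|ne]; first by rewrite !P_eq actmM.
    by rewrite (P_neq _ ne) (P_neq _ ne) comp0r.
  by move=> c ne; rewrite P_neq // comp0l.
- move=> x; apply: ent_ext => b a; case: (eqVneq a b) => [->|ne].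
    by rewrite P_eq oid_eq actm1.
  by rewrite P_neq // oid_neq.
- move=> x y r f g; apply: ent_ext => b a; rewrite entD entZ.
  case: (eqVneq a b) => [->|ne]; first by rewrite !P_eq linearD linearZ.
  by rewrite !P_neq // scaler0 addr0.
Qed.

Lemma ent_tr (x y : obj C) (f : orbhom A x y) (b b' a a' : G) (eb : b = b') (ea : a = a') :
  ent f b' a' = comp (eqh (f_equal (fun c => act A c y) eb))
                    (comp (ent f b a) (eqh (f_equal (fun c => act A c x) (esym ea)))).
Proof. exact: ftr. Qed.

Lemma phi3 (x : obj C) :
  orbit_phi A 1g x = @eqh _ (orbit_cat A) _ _ (f_equal (fun x => x) (esym (act1 A x))).
Proof.
apply: ent_ext => b a; rewrite /eqh ent_castH.
case: (eqVneq a b) => [->|ne].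
  rewrite (ent_tr _ (erefl b) (gmulg1 b)) phi_eq oid_eq comp1l //.
  by rewrite !eqh_comp //; apply: eqh_pi.
rewrite phi_neq ?gmulg1 // oid_neq // comp0l // comp0r //.
Qed.

Lemma phi4 (a b : G) (x : obj C) :
  ocomp (orbit_phi A b (act A a x)) (orbit_phi A a x) =
  ocomp (@eqh _ (orbit_cat A) _ _ (f_equal (fun x => x) (actM A a b x))) (orbit_phi A (b \* a) x).
Proof.
have OC := orbit_is_cat.
transitivity (@castH _ (orbit_cat A) _ _ _ _ erefl (f_equal (fun x => x) (actM A a b x))
   (orbit_phi A (b \* a) x)); last by rewrite castH_l.
apply: ent_ext => c d; rewrite ent_castH ocompE.
rewrite (@fsum1 _ _ (c \* b)); last by move=> e ne; rewrite phi_neq // comp0l.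
rewrite /=; case: (eqVneq d (c \* b \* a)) => [->|ne].
  rewrite !phi_eq (ent_tr _ (erefl c) (gmulA c b a)) phi_eq.
  by rewrite !eqh_comp //; apply: eqh_pi.
rewrite [ent (orbit_phi A a x) _ _]phi_neq // comp0r // phi_neq ?comp0l ?comp0r //.
by rewrite gmulA.
Qed.

Lemma phi_adj : @is_adjuster _ _ _ A _ (orbitP A) (orbit_phi A).
Proof.
have OC := orbit_is_cat.
split.
- move=> a x y f; apply: ent_ext => b c; rewrite !ocompE.
  rewrite (@fsum1 _ _ c); last by move=> d ne; rewrite P_neq 1?eq_sym // comp0r.
  rewrite (@fsum1 _ _ b); last by move=> d ne; rewrite P_neq // comp0l.
  rewrite /= !P_eq; case: (eqVneq c (b \* a)) => [->|ne].
    by rewrite !phi_eq actm_mul compA // eqhKV // comp1l.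
  by rewrite !phi_neq // comp0l // comp0r.
- move=> a x; exact: (@psi_iso _ _ _ A _ OC (fun x => x) (orbit_phi A) phi3
     (fun a' b' y => phi4 a' b' y)).
- by move=> x; rewrite (castH_l OC) (comp1r OC); exact: phi3.
- by move=> a b x; rewrite (castH_l OC); exact: phi4.
Qed.

Lemma P_ginv : is_ginv (orbitPphi A).
Proof. split; [exact: P_functor | exact: phi_adj]. Qed.


Lemma eqh_sandwich (x x' y y' : obj C) (M : hom C x y) (e1 e1' : y = y') (e2 e2' : x' = x) :
  comp (eqh e1) (comp M (eqh e2)) = comp (eqh e1') (comp M (eqh e2')).
Proof. by rewrite (eqh_pi e1 e1') (eqh_pi e2 e2'). Qed.

Lemma dtr (z y : obj C) (g : forall c : G, hom C (act A c z) y) (c c' : G) (e : c = c') :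
  g c' = comp (g c) (eqh (f_equal (fun c => act A c z) (esym e))).
Proof. by case: c' / e; rewrite comp1r. Qed.

Definition col (x y : obj C) (f : orbhom A x y) (a : G) : hom C (act A a x) y :=
  comp (eqh (act1 A y)) (ent f 1g a).

Lemma col_fin (x y : obj C) (f : orbhom A x y) :
  exists s : seq G, forall a, a \notin s -> col f a = 0.
Proof. by have [s hs] := rowfin f 1g; exists s => a /hs; rewrite /col => ->; rewrite comp0r. Qed.

Lemma fin_supp_col (x y : obj C) (f : orbhom A x y) : fin_supp (col f).
Proof.
have [s hs] := col_fin f; exists s => a; apply: contraR => /hs ->; by rewrite eqxx.
Qed.

Lemma fin_suppP (x y : obj C) (g : forall a : G, hom C (act A a x) y) :
  fin_supp g -> exists s : seq G, forall a, a \notin s -> g a = 0.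
Proof.
by case=> s hs; exists s => a ha; apply/eqP; apply: contraNT ha => /hs.
Qed.

Lemma F1P_ent (x y : obj C) (g : forall a : G, hom C (act A a x) y) :
  fin_supp g -> forall b d, exists E,
  ent (F1 (orbitPphi A) g) b d = comp (actm A b (g (ginvg b \* d))) (eqh E).
Proof.
move=> /fin_suppP [s hs] b d.
have OC := orbit_is_cat.
rewrite /F1 (@ent_fsum _ _ _ s); last first.
  move=> a /hs ->; rewrite (fmap0 P_functor); exact: (comp0l OC).
rewrite (@fsum1 _ _ (ginvg b \* d)); last first.
  move=> a ne; rewrite /= ocompE (@fsum1 _ _ b); last first.
    by move=> c nc; rewrite P_neq // comp0l.
  rewrite /= P_eq phi_neq ?comp0r //.
  by apply: contra ne => /eqP ->; rewrite gmulKg.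
rewrite /= ocompE (@fsum1 _ _ b); last by move=> c nc; rewrite P_neq // comp0l.
rewrite /= P_eq (ent_tr _ (erefl b) (gmulKVg b d)) phi_eq !eqh_comp //.
by eexists.
Qed.

Lemma col_F1P (x y : obj C) (g : forall a : G, hom C (act A a x) y) :
  fin_supp g -> forall a, col (F1 (orbitPphi A) g) a = g a.
Proof.
move=> fg a; rewrite /col; have [E ->] := F1P_ent fg 1g a.
move: E; rewrite (_ : ginvg 1g \* a = a); last by rewrite -{2}(gmulKg 1g a) gmul1g.
move=> E; rewrite actm_one -[fobj _ y]/y compA // compA // eqhKV // comp1l // -compA //.
by rewrite eqh_comp // eqh_id comp1r.
Qed.

Lemma F1P_col (x y : obj C) (f : orbhom A x y) : F1 (orbitPphi A) (col f) = f.
Proof.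
apply: ent_ext => b d; have [E ->] := F1P_ent (fin_supp_col f) b d.
rewrite (ent_tr f (gmulg1 b) (gmulKVg b d)) ent_eqv /col actmM actm_eqh.
rewrite -!compA // !eqh_comp // !compA // !eqh_comp //.
rewrite -!compA //; apply: eqh_sandwich.
Qed.

Lemma P_precovering : is_precovering (orbitPphi A).
Proof.
move=> x y; split.
  move=> f g ff fg e; apply: functional_extensionality_dep => a.
  by rewrite -(col_F1P ff) -(col_F1P fg) e.
by move=> h; exists (col h); [exact: fin_supp_col | exact: F1P_col].
Qed.

Section LFun.
Variables (E : precat k) (Ec : ginvf A E).
Hypotheses (HE : is_cat E) (HEc : is_ginv Ec).
Local Notation Ef := (gfun Ec).
Local Notation chi := (gadj Ec).

Lemma HEf : is_functor Ef. Proof. by case: HEc. Qed.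

Lemma chi_nat (a : G) (x y : obj C) (f : hom C x y) :
  comp (chi a y) (fmap Ef f) = comp (fmap Ef (actm A a f)) (chi a x).
Proof. by case: HEc => _ [h _ _ _]; apply: h. Qed.

Lemma chi1 (x : obj C) : chi 1g x = eqh (f_equal (fobj Ef) (esym (act1 A x))).
Proof. by case: HEc => _ [_ _ h _]; rewrite h castH_l // comp1r. Qed.

Lemma chiM (a b : G) (x : obj C) :
  comp (chi b (act A a x)) (chi a x) =
  comp (eqh (f_equal (fobj Ef) (actM A a b x))) (chi (b \* a) x).
Proof. by case: HEc => _ [_ _ _ h]; rewrite h castH_l. Qed.

Definition Lmap (x y : obj C) (f : orbhom A x y) : hom E (fobj Ef x) (fobj Ef y) :=
  F1 Ec (col f).

Definition Lfun : functor (orbit_cat A) E := @Functor k (orbit_cat A) E (fobj Ef) Lmap.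

Lemma col_lin (x y : obj C) r (f g : orbhom A x y) a :
  col (r *: f + g) a = r *: col f a + col g a.
Proof. by rewrite /col entD entZ compDr // compZr. Qed.

Lemma L_lin (x y : obj C) : linP (@Lmap x y).
Proof.
move=> r f g; rewrite /Lmap /F1.
have [s1 h1] := col_fin f; have [s2 h2] := col_fin g.
have H (h : orbhom A x y) (s : seq G) : (forall a, a \notin s -> col h a = 0) ->
   forall a, a \notin s1 ++ s2 ->  a \notin s -> comp (fmap Ef (col h a)) (chi a x) = 0.
  by move=> hh a _ /hh ->; rewrite (fmap0 HEf) comp0l.
rewrite (@fsumT _ _ (s1 ++ s2)); last first.
  move=> a; rewrite mem_cat negb_or => /andP [/h1 e1 /h2 e2].
  by rewrite col_lin e1 e2 scaler0 addr0 (fmap0 HEf) comp0l.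
rewrite (@fsumT _ _ (s1 ++ s2) (fun a => comp (fmap Ef (col f a)) (chi a x))); last first.
  by move=> a; rewrite mem_cat negb_or => /andP [/h1 -> _]; rewrite (fmap0 HEf) comp0l.
rewrite (@fsumT _ _ (s1 ++ s2) (fun a => comp (fmap Ef (col g a)) (chi a x))); last first.
  by move=> a; rewrite mem_cat negb_or => /andP [_ /h2 ->]; rewrite (fmap0 HEf) comp0l.
rewrite scaler_sumr -big_split; apply: eq_bigr => a _.
by rewrite col_lin (fmapD HEf) compDl // (fmapZ HEf) compZl.
Qed.


Lemma col_P (x' x y : obj C) (h : orbhom A x y) (u : hom C x' x) c :
  col (ocomp h (fmap (orbitP A) u)) c = comp (col h c) (actm A c u).
Proof.
rewrite /col ocompE (@fsum1 _ _ c) /=; first by rewrite P_eq compA.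
by move=> d ne; rewrite P_neq 1?eq_sym // comp0r.
Qed.

Lemma L_P (x' x y : obj C) (h : orbhom A x y) (u : hom C x' x) :
  Lmap (ocomp h (fmap (orbitP A) u)) = comp (Lmap h) (fmap Ef u).
Proof.
have [s hs] := col_fin h.
rewrite /Lmap /F1 (@fsum_compl _ _ HE _ _ _ _ s); last first.
  by move=> a /hs ->; rewrite (fmap0 HEf) comp0l.
apply: eq_fsbigr => c _; rewrite col_P (fmapM HEf) -compA // -chi_nat compA //.
Qed.

Lemma gmulVKg (c a : G) : c \* ginvg a \* a = c.
Proof. by rewrite -gmulA gmulVg gmulg1. Qed.

Lemma gmulKVg' (c a : G) : c \* a \* ginvg a = c.
Proof. by rewrite -gmulA gmulV gmulg1. Qed.

Lemma eqE (a : G) (x : obj C) (c : G) : act A c x = act A (c \* ginvg a) (act A a x).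
Proof. by rewrite -actM gmulVKg. Qed.

Lemma col_phi (a : G) (x y : obj C) (h : orbhom A (act A a x) y) c :
  col (ocomp h (orbit_phi A a x)) c = comp (col h (c \* ginvg a)) (eqh (eqE a x c)).
Proof.
rewrite /col ocompE (@fsum1 _ _ (c \* ginvg a)) /=.
  rewrite (ent_tr _ (erefl _) (gmulVKg c a)) phi_eq !eqh_comp //.
  by rewrite -compA //; apply: eqh_sandwich.
move=> d ne; rewrite phi_neq ?comp0r //.
by apply: contra ne => /eqP ->; rewrite gmulKVg'.
Qed.

Lemma mulr_bij (a : G) : bijective (fun d => d \* a).
Proof. by exists (fun d => d \* ginvg a) => d; rewrite ?gmulKVg' ?gmulVKg. Qed.

Lemma L_phi (a : G) (x y : obj C) (h : orbhom A (act A a x) y) :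
  Lmap (ocomp h (orbit_phi A a x)) = comp (Lmap h) (chi a x).
Proof.
have [s hs] := col_fin h.
rewrite /Lmap /F1 (@fsum_compl _ _ HE _ _ _ _ s); last first.
  by move=> d /hs ->; rewrite (fmap0 HEf) comp0l.
rewrite -(@fsum_reindex (hom E (fobj Ef x) (fobj Ef y)) _ _ _ (mulr_bij a)).
apply: eq_fsbigr => d _; rewrite /= col_phi.
rewrite (dtr (col h) (esym (gmulKVg' d a))) !(fmapM HEf) !(fmap_eqh HEf).
rewrite -!compA // [X in comp _ (comp _ X)]compA // eqh_comp // chiM.
by congr (comp _ (comp _ (comp _ _))); apply: eqh_pi.
Qed.

Lemma L_id (x : obj C) : Lmap (oid A x) = idm (fobj Ef x).
Proof.
rewrite /Lmap /F1 (@fsum1 _ _ 1g) /=.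
  rewrite /col oid_eq comp1r // (fmap_eqh HEf) chi1 eqh_comp //; exact: eqh_id.
by move=> c ne; rewrite /col oid_neq // comp0r // (fmap0 HEf) comp0l.
Qed.

Lemma L_comp (x y z : obj C) (g : orbhom A y z) (f : orbhom A x y) :
  Lmap (ocomp g f) = comp (Lmap g) (Lmap f).
Proof.
have OC := orbit_is_cat.
have [s hs] := col_fin f.
have T0 : forall a, a \notin s ->
   (comp (fmap (gfun (orbitPphi A)) (col f a)) (gadj (orbitPphi A) a x) : hom (orbit_cat A) x y) = 0.
  by move=> a /hs ->; rewrite (fmap0 P_functor) (comp0l OC).
have -> : ocomp g f = \sum_(a \in [set: G]) ocomp g (ocomp (fmap (orbitP A) (col f a)) (orbit_phi A a x)).
  rewrite -{1}(F1P_col f) /F1.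
  exact: (@fsum_compr _ _ OC _ _ _ _ s g _ T0).
rewrite -(@fsum_linP _ _ _ _ (@L_lin x z) _ _ s); last first.
  by move=> a /T0 h; change (ocomp g (comp (fmap (gfun (orbitPphi A)) (col f a)) (gadj (orbitPphi A) a x)) = 0); rewrite h; exact: (comp0r OC).
rewrite {3}/Lmap /F1 (@fsum_compr _ _ HE _ _ _ _ s); last first.
  by move=> a /hs ->; rewrite (fmap0 HEf) comp0l.
apply: eq_fsbigr => a _.
by rewrite ocompA L_phi L_P -compA.
Qed.

Lemma L_functor : is_functor Lfun.
Proof.
split.
- by move=> x y z g f; apply: L_comp.
- by move=> x; apply: L_id.
- by move=> x y r f g; apply: L_lin.
Qed.

Lemma L_Pu (x y : obj C) (u : hom C x y) : Lmap (fmap (orbitP A) u) = fmap Ef u.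
Proof. by rewrite -{1}(ocomp1l (fmap (orbitP A) u)) L_P L_id comp1l. Qed.

Lemma L_phia (a : G) (x : obj C) : Lmap (orbit_phi A a x) = chi a x.
Proof. by rewrite -{1}(ocomp1l (orbit_phi A a x)) L_phi L_id comp1l. Qed.

Lemma L_whisk : whisker Lfun (orbitPphi A) = Ec.
Proof.
rewrite /whisker /fcomp /=; apply: ginvf_ext.
  apply: functional_extensionality_dep => x; apply: functional_extensionality_dep => y.
  by apply: functional_extensionality_dep => f; apply: L_Pu.
apply: functional_extensionality_dep => a; apply: functional_extensionality_dep => x.
exact: L_phia.
Qed.

End LFun.


Lemma U_lemma (E : precat k) (HE : is_cat E) (L L' : functor (orbit_cat A) E) :
  is_functor L -> is_functor L' ->
  ginvf_iso (whisker L (orbitPphi A)) (whisker L' (orbitPphi A)) ->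
  nat_isomorphic L L'.
Proof.
move=> FL FL' [th [thn thi thc]].
have OC := orbit_is_cat.
have thc' : forall a x, comp (th (act A a x)) (fmap L (orbit_phi A a x)) =
   comp (fmap L' (orbit_phi A a x)) (th x) by exact: thc.
have thn' : forall x y (f : hom C x y), comp (th y) (fmap L (fmap (orbitP A) f)) =
   comp (fmap L' (fmap (orbitP A) f)) (th x) by exact: thn.
exists th; split => // x y f.
have [s hs] := col_fin f.
have T0 : forall a, a \notin s ->
   (comp (fmap (gfun (orbitPphi A)) (col f a)) (gadj (orbitPphi A) a x) : hom (orbit_cat A) x y) = 0.
  by move=> a /hs ->; rewrite (fmap0 P_functor) (comp0l OC).
rewrite -(F1P_col f) /F1 (fmap_fsum FL T0) (fmap_fsum FL' T0).
rewrite (@fsum_compr _ _ HE _ _ _ _ s); last by move=> a /T0 ->; rewrite (fmap0 FL).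
rewrite (@fsum_compl _ _ HE _ _ _ _ s); last by move=> a /T0 ->; rewrite (fmap0 FL').
apply: eq_fsbigr => a _; rewrite (fmapM FL) (fmapM FL').
rewrite compA // (thn' _ _ (col f a)).
transitivity (comp (fmap L' (fmap (orbitP A) (col f a)))
   (comp (th (act A a x)) (fmap L (orbit_phi A a x)))).
  exact: (esym (compA HE _ _ _)).
rewrite thc'; exact: (compA HE _ _ _).
Qed.

End OrbitB.


Section NatIso.
Variable k : comPzRingType.

Lemma natiso_refl (C D : precat k) (HD : is_cat D) (F : functor C D) :
  nat_isomorphic F F.
Proof.
exists (fun x => idm (fobj F x)); split.
  by move=> x y f; rewrite comp1l // comp1r.
by move=> x; apply: iso_id.
Qed.

Lemma natiso_sym (C D : precat k) (HD : is_cat D) (F F' : functor C D) :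
  nat_isomorphic F F' -> nat_isomorphic F' F.
Proof.
move=> [eta [en ei]].
pose inv x := proj1_sig (iso_inv (ei x)).
have inv1 x : comp (inv x) (eta x) = idm _ by rewrite /inv; case: iso_inv => g [].
have inv2 x : comp (eta x) (inv x) = idm _ by rewrite /inv; case: iso_inv => g [].
exists inv; split.
  move=> x y f; apply: (@iso_cancel_l _ _ HD _ _ _ (eta y)); first exact: ei.
  rewrite compA // inv2 comp1l //.
  apply: (@iso_cancel_r _ _ HD _ _ _ (eta x)); first exact: ei.
  by rewrite -!compA // inv1 comp1r // en.
by move=> x; exists (eta x).
Qed.

Lemma natiso_trans (C D : precat k) (HD : is_cat D) (F F' F'' : functor C D) :
  nat_isomorphic F F' -> nat_isomorphic F' F'' -> nat_isomorphic F F''.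
Proof.
move=> [e1 [n1 i1]] [e2 [n2 i2]]; exists (fun x => comp (e2 x) (e1 x)); split.
  by move=> x y f; rewrite -compA // n1 compA // n2 -compA.
by move=> x; apply: iso_comp.
Qed.

Lemma natiso_whiskL (B C D : precat k) (HD : is_cat D) (F F' : functor B C)
  (K : functor C D) : is_functor K ->
  nat_isomorphic F F' -> nat_isomorphic (fcomp F K) (fcomp F' K).
Proof.
move=> HK [e [n i]]; exists (fun x => fmap K (e x)); split.
  by move=> x y f; rewrite /= -!(fmapM HK) n.
by move=> x; apply: (fmap_iso HK).
Qed.

Lemma natiso_whiskR (B C D : precat k) (F F' : functor C D) (H : functor B C) :
  nat_isomorphic F F' -> nat_isomorphic (fcomp H F) (fcomp H F').
Proof.
move=> [e [n i]]; exists (fun x => e (fobj H x)); split.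
  by move=> x y f; apply: n.
by move=> x; apply: i.
Qed.

Lemma natiso_fidl (C D : precat k) (HD : is_cat D) (F : functor C D) :
  nat_isomorphic F (fcomp (fid C) F).
Proof. exact: (natiso_refl HD F). Qed.

Lemma natiso_fidr (C D : precat k) (HD : is_cat D) (F : functor C D) :
  nat_isomorphic F (fcomp F (fid D)).
Proof. exact: (natiso_refl HD F). Qed.

End NatIso.

Section GIso.
Variables (k : comPzRingType) (G : group) (C : precat k) (A : gaction G C).

Lemma giso_refl (D : precat k) (HD : is_cat D) (F : ginvf A D) : ginvf_iso F F.
Proof.
exists (fun x => idm _); split.
- by move=> x y f; rewrite comp1l // comp1r.
- by move=> x; apply: iso_id.
- by move=> a x; rewrite comp1l // comp1r.
Qed.

Lemma giso_sym (D : precat k) (HD : is_cat D) (F F' : ginvf A D) :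
  ginvf_iso F F' -> ginvf_iso F' F.
Proof.
move=> [eta [en ei ec]].
pose inv x := proj1_sig (iso_inv (ei x)).
have inv1 x : comp (inv x) (eta x) = idm _ by rewrite /inv; case: iso_inv => g [].
have inv2 x : comp (eta x) (inv x) = idm _ by rewrite /inv; case: iso_inv => g [].
exists inv; split.
- move=> x y f; apply: (@iso_cancel_l _ _ HD _ _ _ (eta y)); first exact: ei.
  rewrite compA // inv2 comp1l //.
  apply: (@iso_cancel_r _ _ HD _ _ _ (eta x)); first exact: ei.
  by rewrite -!compA // inv1 comp1r // en.
- by move=> x; exists (eta x).
- move=> a x; apply: (@iso_cancel_l _ _ HD _ _ _ (eta (act A a x))); first exact: ei.
  rewrite compA // inv2 comp1l //.
  apply: (@iso_cancel_r _ _ HD _ _ _ (eta x)); first exact: ei.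
  by rewrite -!compA // inv1 comp1r // ec.
Qed.

Lemma giso_trans (D : precat k) (HD : is_cat D) (F F' F'' : ginvf A D) :
  ginvf_iso F F' -> ginvf_iso F' F'' -> ginvf_iso F F''.
Proof.
move=> [e1 [n1 i1 c1]] [e2 [n2 i2 c2]]; exists (fun x => comp (e2 x) (e1 x)); split.
- by move=> x y f; rewrite -compA // n1 compA // n2 -compA.
- by move=> x; apply: iso_comp.
- by move=> a x; rewrite -compA // c1 compA // c2 -compA.
Qed.

Lemma giso_whisk (D D' : precat k) (K : functor D D') (F F' : ginvf A D) :
  is_functor K -> ginvf_iso F F' -> ginvf_iso (whisker K F) (whisker K F').
Proof.
move=> HK [e [n i c]]; exists (fun x => fmap K (e x)); split.
- by move=> x y f; rewrite /= -!(fmapM HK) n.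
- by move=> x; apply: (fmap_iso HK).
- by move=> a x; rewrite /= -!(fmapM HK) c.
Qed.

Lemma giso_natiso (D D' : precat k) (N N' : functor D D') (F : ginvf A D) :
  nat_isomorphic N N' -> ginvf_iso (whisker N F) (whisker N' F).
Proof.
move=> [e [n i]]; exists (fun x => e (fobj (gfun F) x)); split.
- by move=> x y f; apply: n.
- by move=> x; apply: i.
- by move=> a x; apply: n.
Qed.

End GIso.

Section Equiv.
Variable k : comPzRingType.
Variables (C D : precat k) (HC : is_cat C) (HD : is_cat D).

Definition faithful (H : functor C D) :=
  forall x y (f g : hom C x y), fmap H f = fmap H g -> f = g.
Definition full (H : functor C D) :=
  forall x y (h : hom D (fobj H x) (fobj H y)), exists f, fmap H f = h.

Lemma equiv_ff (H : functor C D) :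
  is_equivalence H -> [/\ faithful H, full H & is_dense H].
Proof.
case=> HH [H' [HH' [[eta [en ei]] [eps [pn pi]]]]].
have fH' : forall x y (f g : hom D x y), fmap H' f = fmap H' g -> f = g.
  move=> x y f g e; apply: (@iso_cancel_r _ _ HD _ _ _ (eps x)); first exact: pi.
  by rewrite -[comp f _](pn x y f) -[comp g _](pn x y g) /= e.
have fH : faithful H.
  move=> x y f g e; apply: (@iso_cancel_r _ _ HC _ _ _ (eta x)); first exact: ei.
  by rewrite -[comp f _](en x y f) -[comp g _](en x y g) /= e.
split => //.
- move=> x y h.
  have [ei' [ei1 ei2]] := ei x.
  exists (comp (eta y) (comp (fmap H' h) ei')).
  apply: fH'; apply: (@iso_cancel_l _ _ HC _ _ _ (eta y)); first exact: ei.
  have := en x y (comp (eta y) (comp (fmap H' h) ei')); rewrite /= => ->.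
  by rewrite -!compA // ei1 comp1r.
- move=> y; exists (fobj H' y); exists (eps y); exact: pi.
Qed.

Lemma ff_equiv (H : functor C D) :
  is_functor H -> faithful H -> full H -> is_dense H -> is_equivalence H.
Proof.
move=> HH fH fuH dH.
pose ob y := proj1_sig (constructive_indefinite_description (dH y)).
have obP y : exists i : hom D (fobj H (ob y)) y, is_iso i.
  by rewrite /ob; case: constructive_indefinite_description.
pose iy y := proj1_sig (constructive_indefinite_description (obP y)).
have iyP y : is_iso (iy y) by rewrite /iy; case: constructive_indefinite_description.
pose jy y := proj1_sig (iso_inv (iyP y)).
have jy1 y : comp (jy y) (iy y) = idm _ by rewrite /jy; case: iso_inv => g [].
have jy2 y : comp (iy y) (jy y) = idm _ by rewrite /jy; case: iso_inv => g [].
pose pre x1 x2 (h : hom D (fobj H x1) (fobj H x2)) :=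
  proj1_sig (constructive_indefinite_description (fuH x1 x2 h)).
have preP x1 x2 (h : hom D (fobj H x1) (fobj H x2)) : fmap H (pre x1 x2 h) = h.
  by rewrite /pre; case: constructive_indefinite_description.
pose H'map y y' (h : hom D y y') : hom C (ob y) (ob y') :=
  pre _ _ (comp (jy y') (comp h (iy y))).
pose H' := @Functor k D C ob H'map.
have HmH' y y' (h : hom D y y') : fmap H (fmap H' h) = comp (jy y') (comp h (iy y)).
  exact: preP.
split => //; exists H'; split; [split|split].
- move=> x y z g f; apply: fH; rewrite (fmapM HH) !HmH'.
  by rewrite -!compA // [in RHS](compA HD (iy y)) jy2 comp1l.
- move=> x; apply: fH; rewrite (fmap1 HH) HmH' comp1l //; exact: jy1.
- move=> x y r f g; apply: fH; rewrite (fmapD HH) (fmapZ HH) !HmH'.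
  by rewrite compDl // compZl // compDr // compZr.
- pose c x := pre _ _ (iy (fobj H x)).
  pose d x := pre _ _ (jy (fobj H x)).
  exists c; split.
    move=> x y f; apply: fH; rewrite !(fmapM HH) (HmH' _ _ (fmap H f)) !preP.
    by rewrite !compA // jy2 comp1l.
  move=> x; exists (d x); split; apply: fH; rewrite (fmapM HH) (fmap1 HH) !preP.
    exact: jy1.
  exact: jy2.
- exists iy; split.
    move=> x y f; rewrite /= HmH' !compA // jy2 comp1l //.
  by move=> y; apply: iyP.
Qed.

End Equiv.

Lemma fid_functor (k : comPzRingType) (C : precat k) : is_functor (fid C).
Proof. by split. Qed.

Lemma fcomp_functor (k : comPzRingType) (B C D : precat k) (F : functor B C)
  (K : functor C D) : is_functor F -> is_functor K -> is_functor (fcomp F K).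
Proof.
move=> HF HK; split.
- by move=> x y z g f; rewrite /= (fmapM HF) (fmapM HK).
- by move=> x; rewrite /= (fmap1 HF) (fmap1 HK).
- by move=> x y r f g; rewrite /= (fmapD HF) (fmapZ HF) (fmapD HK) (fmapZ HK).
Qed.

Section Main.
Variables (k : comPzRingType) (G : group) (C : precat k) (A : gaction G C).
Variables (C' : precat k) (F : ginvf A C').
Hypotheses (HC : is_cat C) (HA : is_gcat A) (HC' : is_cat C') (HF : is_ginv F).

Local Notation P := (orbitPphi A).

Lemma p1_p5 : is_covering F ->
  exists H : functor (orbit_cat A) C', is_equivalence H /\ F = whisker H P.
Proof.
move=> [prec dens].
have LF := L_functor HC HA HC' HF; have LW := L_whisk HC HA HC' HF.
exists (Lfun F); split; last by rewrite LW.
apply: (ff_equiv HC' LF).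
- move=> x y f g e.
  have ecol : col f = col g.
    apply: (proj1 (prec x y)); [exact: fin_supp_col | exact: fin_supp_col | exact: e].
  by rewrite -(F1P_col HC HA f) -(F1P_col HC HA g) ecol.
- move=> x y h; have [g fg <-] := proj2 (prec x y) h.
  exists (F1 P g); change (F1 F (col (F1 P g)) = F1 F g); congr (F1 F _).
  by apply: functional_extensionality_dep => a; apply: col_F1P.
- exact: dens.
Qed.


Lemma F1_whisk (H : functor (orbit_cat A) C') (x y : obj C)
  (g : forall a : G, hom C (act A a x) y) :
  is_functor H -> fin_supp g -> F1 (whisker H P) g = fmap H (F1 P g).
Proof.
move=> HH /(fin_suppP (A:=A)) [s hs].
have OC := orbit_is_cat HC HA.
have T0 : forall a, a \notin s ->
   (comp (fmap (gfun P) (g a)) (gadj P a x) : hom (orbit_cat A) x y) = 0.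
  by move=> a /hs ->; rewrite (fmap0 (P_functor HC HA)) (comp0l OC).
rewrite /F1 (fmap_fsum HH T0); apply: eq_fsbigr => a _; rewrite /= (fmapM HH) //.
Qed.

Lemma p5_p1 : (exists H : functor (orbit_cat A) C', is_equivalence H /\ F = whisker H P) ->
  is_covering F.
Proof.
move=> [H [HHe eF]]; have OC := orbit_is_cat HC HA.
have [fH fuH dH] := equiv_ff OC HC' HHe; have HH := proj1 HHe.
rewrite eF; split; last exact: dH.
move=> x y; split.
  move=> f g ff fg e; rewrite !F1_whisk // in e; have e' := fH _ _ _ _ e.
  apply: functional_extensionality_dep => a.
  by rewrite -(col_F1P HC HA ff) -(col_F1P HC HA fg) e'.
move=> h; have [f' ef'] := fuH x y h.
exists (col f'); first exact: (fin_supp_col HC).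
by rewrite F1_whisk ?F1P_col //; exact: (fin_supp_col HC).
Qed.

Lemma p5_p4 : (exists H : functor (orbit_cat A) C', is_equivalence H /\ F = whisker H P) ->
  exists H : functor (orbit_cat A) C', is_equivalence H /\ ginvf_iso F (whisker H P).
Proof.
move=> [H [HHe eF]]; exists H; split => //; rewrite -eF; exact: giso_refl.
Qed.

Lemma p4_p5 : (exists H : functor (orbit_cat A) C', is_equivalence H /\ ginvf_iso F (whisker H P)) ->
  exists H : functor (orbit_cat A) C', is_equivalence H /\ F = whisker H P.
Proof.
move=> [H [HHe iso]]; have OC := orbit_is_cat HC HA.
have LF := L_functor HC HA HC' HF; have LW := L_whisk HC HA HC' HF.
case: (HHe) => HH [H' [HH' [n1 n2]]].
have nLH : nat_isomorphic (Lfun F) H.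
  by apply: (U_lemma HC HA HC' LF HH); rewrite LW.
exists (Lfun F); split; last by rewrite LW.
split => //; exists H'; split => //; split.
  exact: (natiso_trans OC (natiso_whiskL OC HH' nLH) n1).
exact: (natiso_trans HC' (natiso_whiskR H' nLH) n2).
Qed.

Lemma p5_univ (Q : forall E : precat k, ginvf A E -> Prop) :
  (exists H : functor (orbit_cat A) C', is_equivalence H /\ F = whisker H P) ->
  is_universal_among F Q.
Proof.
move=> [H [[HH [H' [HH' [n1 n2]]]] eF]] E Ec HE HEc _.
have OC := orbit_is_cat HC HA.
have MF := L_functor HC HA HE HEc; have MW := L_whisk HC HA HE HEc.
split.
  exists (fcomp H' (Lfun Ec)); split; first exact: fcomp_functor.
  rewrite eF -{1}MW.
  exact: (giso_natiso P (natiso_trans HE (natiso_fidl HE (Lfun Ec))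
            (natiso_whiskL HE MF (natiso_sym OC n1)))).
move=> K1 K2 HK1 HK2 i1 i2.
have i12 := giso_trans HE (giso_sym HE i1) i2.
rewrite eF in i12.
have u := U_lemma HC HA HE (fcomp_functor HH HK1) (fcomp_functor HH HK2) i12.
apply: (natiso_trans HE (natiso_fidl HE K1)).
apply: (natiso_trans HE (natiso_whiskL HE HK1 (natiso_sym HC' n2))).
apply: (natiso_trans HE (natiso_whiskR H' u)).
apply: (natiso_trans HE (natiso_whiskL HE HK2 n2)).
exact: (natiso_sym HE (natiso_fidl HE K2)).
Qed.

Lemma univ_p5 (Q : forall E : precat k, ginvf A E -> Prop) :
  is_universal_among F Q -> Q (orbit_cat A) P -> Q C' F ->
  exists H : functor (orbit_cat A) C', is_equivalence H /\ F = whisker H P.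
Proof.
move=> HU QP QF; have OC := orbit_is_cat HC HA; have PG := P_ginv HC HA.
have [[K [HK iK0]] _] := HU (orbit_cat A) P OC PG QP.
have [_ uq] := HU C' F HC' HF QF.
have LF := L_functor HC HA HC' HF; have LW := L_whisk HC HA HC' HF.
have iK := iK0; rewrite -LW in iK.
have n1 := U_lemma HC HA OC (fid_functor _) (fcomp_functor LF HK) iK.
have h := giso_whisk LF iK0; rewrite LW in h.
have hf : ginvf_iso F (whisker (fid C') F) by exact: (giso_refl HC' F).
have n2 := uq _ _ (fcomp_functor HK LF) (fid_functor C') h hf.
exists (Lfun F); split; last by rewrite LW.
split => //; exists K; split => //; split.
  exact: (natiso_sym OC n1).
exact: n2.
Qed.

End Main.

Close Scope classical_set_scope.
Close Scope ring_scope.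

Theorem mainTheorem4 (k : comPzRingType) (G : group) (C : precat k)
  (A : gaction G C) (C' : precat k) (F : ginvf A C') :
  is_cat C -> is_gcat A -> is_cat C' -> is_ginv F ->
  let P1 := is_covering F in
  let P2 := is_precovering F /\
            is_universal_among F (fun E (Ec : ginvf A E) => is_precovering Ec) in
  let P3 := is_universal_among F (fun E (Ec : ginvf A E) => True) in
  let P4 := exists H : functor (orbit_cat A) C',
              is_equivalence H /\ ginvf_iso F (whisker H (orbitPphi A)) in
  let P5 := exists H : functor (orbit_cat A) C',
              is_equivalence H /\ F = whisker H (orbitPphi A) in
  [/\ P1 <-> P2, P1 <-> P3, P1 <-> P4 & P1 <-> P5].
Proof.
move=> HC HA HC' HF; cbv zeta.
have h15 := p1_p5 HC HA HC' HF; have h51 := p5_p1 HC HA HC'.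
split.
- split.
    move=> h1; split; first exact: (proj1 h1).
    exact: (p5_univ HC HA HC' (h15 h1)).
  move=> [hp hu]; apply: h51.
  exact: (univ_p5 HC HA HC' HF hu (P_precovering HC HA) hp).
- split.
    by move=> h1; exact: (p5_univ HC HA HC' (h15 h1)).
  by move=> hu; apply: h51; exact: (univ_p5 HC HA HC' HF hu I I).
- split.
    by move=> h1; exact: (p5_p4 HC' (h15 h1)).
  by move=> h4; apply: h51; exact: (p4_p5 HC HA HC' HF h4).
- by split; [exact: h15 | exact: h51].
Qed.
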